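(* Fix a positive integer $n$ and a nonzero $n$-partition $\lambda$ with $\lambda_n=0$. For every $n$-semistandard tableau $T$ of shape $\lambda$, $Y_\lambda(\pi_T)=S(T)$.
   Context: Identify $\lambda=(\lambda_1,\dots,\lambda_n)$ with its Young diagram; $c_j$ is the length of column $j$; $\zeta_1<\dots<\zeta_d$ are the distinct column lengths. For a permutation $\phi$ (one-line form), $Y_\lambda(\phi)$ is the tableau of shape $\lambda$ whose columns of length $\zeta_h$ contain $\phi_1,\dots,\phi_{\zeta_h}$ in increasing order ($1\le h\le d$). Write $(j,i)$ for the box in column $j$, row $i$. Reading order: $(l,k)\le(j,i)$ iff $l<j$, or $l=j$ and $k\ge i$; convention $(j,c_j+1)$ means $(j-1,1)$. An $n$-semistandard tableau $T$ of shape $\lambda$ has entries in $[n]$, weakly increasing along rows, strictly increasing down columns; $T(j,i)$ is its entry, $C_j$ its $j$-th column. Scanning tableau: the EWIS of a sequence $x_1,x_2,\dots$ is $x_{a_1},x_{a_2},\dots$ with $a_1=1$ and $a_b$ the smallest index $>a_{b-1}$ with $x_{a_b}\ge x_{a_{b-1}}$. For each column $j$ and $i=c_j,\dots,1$ in turn: delete the boxes of previously computed $P(T;j,k)$, $k>i$; form the sequence of entries in the lowest box of each of columns $j,\dots,\lambda_1$ of the current shape (skipping empty columns); $P(T;j,i)$ is the set of locations of the terms of its EWIS. $S(T)$ is the filling of $\lambda$ whose entry at $(j,i)$ is $T$ at the last location of $P(T;j,i)$. Greedy procedure: $\pi^{(1,1)}$ has first $c_1$ entries those of $C_1$ increasing,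 followed by the rest of $[n]$ increasing. For $(j,i)$ with $j\ge2$ in reading order from $(2,c_2)$ to $(\lambda_1,1)$, define $\pi^{(j,i)}$ from $\pi:=\pi^{(j,i+1)}$: if $T(j-1,i)=T(j,i)$ set $\pi^{(j,i)}=\pi$; otherwise let $i_0=i$, and given $i_{x-1}$ with $\pi_{i_{x-1}}<T(j,i)$ let $i_x$ be the smallest index $>c_j$ with $\pi_{i_{x-1}}<\pi_{i_x}\le T(j,i)$, stopping at $i_m$ with $\pi_{i_m}=T(j,i)$; set $\pi^{(j,i)}_{i_x}=\pi_{i_{x-1}}$ ($1\le x\le m$), $\pi^{(j,i)}_{i_0}=\pi_{i_m}$, others unchanged. $\pi_T:=\pi^{(\lambda_1,1)}$. *)

(* Defs.v *)
From mathcomp Require Import all_boot.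
Set Implicit Arguments. Unset Strict Implicit. Unset Printing Implicit Defensive.

(* Conventions:
   - a partition [lam] is a seq nat  [:: lam_1; ...; lam_n]  (1-indexed in the
     paper, nth 0 lam (k-1) here);
   - columns j and rows i are 1-indexed; a box is (j, i) = (column, row);
   - a filling/tableau of shape lam is a function  T : nat -> nat -> nat,
     T j i = entry in column j, row i (values off the shape are irrelevant);
   - a permutation in one-line form is a seq nat phi = [:: phi_1; ...; phi_n]. *)

Section Defs.
Variable lam : seq nat.

Definition ncols : nat := head 0 lam.

Definition collen (j : nat) : nat := count (fun x => j <= x) lam.

Definition in_shape (j i : nat) : Prop := 1 <= j /\ 1 <= i <= collen j.

Definition is_npartition (n : nat) : Prop :=
  size lam = n /\ sorted geq lam.

Definition semistandard (n : nat) (T : nat -> nat -> nat) : Prop :=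
  [/\ forall j i, in_shape j i -> 1 <= T j i <= n,
      forall j i, in_shape j i -> in_shape j.+1 i -> T j i <= T j.+1 i
    & forall j i, in_shape j i -> in_shape j i.+1 -> T j i < T j i.+1].

Definition pent (phi : seq nat) (k : nat) : nat := nth 0 phi k.-1.

Definition Ytab (phi : seq nat) (j i : nat) : nat :=
  nth 0 (sort leq (take (collen j) phi)) i.-1.

(* earliest weakly increasing subsequence of a sequence of located values:
   the first term, then repeatedly the first later term >= the last chosen. *)
Fixpoint ewis_aux (T : nat -> nat -> nat) (v : nat) (s : seq (nat * nat))
  : seq (nat * nat) :=
  match s with
  | [::] => [::]
  | x :: s' => if v <= T x.1 x.2 then x :: ewis_aux T (T x.1 x.2) s'
               else ewis_aux T v s'
  end.

Definition ewis (T : nat -> nat -> nat) (s : seq (nat * nat)) : seq (nat * nat) :=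
  match s with
  | [::] => [::]
  | x :: s' => x :: ewis_aux T (T x.1 x.2) s'
  end.

(* current shape given by column heights h; the sequence of lowest boxes of
   columns j, ..., lam_1, skipping empty columns *)
Definition lowest_boxes (h : nat -> nat) (j : nat) : seq (nat * nat) :=
  [seq (l, h l) | l <- iota j (ncols.+1 - j) & 0 < h l].

(* delete the boxes of P (each is the lowest box of its column) *)
Definition delete_boxes (h : nat -> nat) (P : seq (nat * nat)) : nat -> nat :=
  fun l => h l - (l \in map fst P).

(* the list [P(T;j,c_j); P(T;j,c_j - 1); ...] computed m steps from heights h *)
Fixpoint scan_steps (T : nat -> nat -> nat) (j : nat) (h : nat -> nat) (m : nat)
  : seq (seq (nat * nat)) :=
  match m with
  | 0 => [::]
  | m'.+1 => let P := ewis T (lowest_boxes h j) in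
             P :: scan_steps T j (delete_boxes h P) m'
  end.

Definition Pscan (T : nat -> nat -> nat) (j i : nat) : seq (nat * nat) :=
  nth [::] (scan_steps T j collen (collen j)) (collen j - i).

Definition Stab (T : nat -> nat -> nat) (j i : nat) : nat :=
  let b := last (0, 0) (Pscan T j i) in T b.1 b.2.

Definition pi_init (n : nat) (T : nat -> nat -> nat) : seq nat :=
  let C1 := [seq T 1 i | i <- iota 1 (collen 1)] in
  sort leq C1 ++ [seq k <- iota 1 n | k \notin C1].

(* the indices i_1, ..., i_m: i_x is the smallest index > cj with
   pi_{i_{x-1}} < pi_{i_x} <= t, stopping when pi_{i_m} = t.
   (fuel n suffices as values strictly increase; if no such index exists the
   chain is cut, a case that does not occur for semistandard T) *)
Fixpoint chain (fuel : nat) (n : nat) (pi : seq nat) (cj t cur : nat) : seq nat :=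
  match fuel with
  | 0 => [::]
  | fuel'.+1 =>
    if pent pi cur == t then [::] else
    match [seq k <- iota cj.+1 (n - cj) |
            (pent pi cur < pent pi k) && (pent pi k <= t)] with
    | k :: _ => k :: chain fuel' n pi cj t k
    | [::] => [::]
    end
  end.

Definition assign (pi : seq nat) (ks vs : seq nat) : seq nat :=
  foldl (fun p kv => set_nth 0 p kv.1.-1 kv.2) pi (zip ks vs).

Definition greedy_step (n : nat) (T : nat -> nat -> nat) (pi : seq nat)
  (ji : nat * nat) : seq nat :=
  let (j, i) := ji in
  if T j.-1 i == T j i then pi else
  let I := i :: chain n n pi (collen j) (T j i) i in
  (* new pi_{i_x} = pi_{i_{x-1}} (1 <= x <= m), new pi_{i_0} = pi_{i_m} *)
  assign pi I (rotr 1 [seq pent pi k | k <- I]).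

Definition reading_boxes : seq (nat * nat) :=
  flatten [seq [seq (j, i) | i <- rev (iota 1 (collen j))]
          | j <- iota 2 ncols.-1].

Definition pi_T (n : nat) (T : nat -> nat -> nat) : seq nat :=
  foldl (greedy_step n T) (pi_init n T) reading_boxes.

End Defs.

(* Main.v *)
Require Import Defs.
From mathcomp Require Import all_boot zify.
Set Implicit Arguments. Unset Strict Implicit. Unset Printing Implicit Defensive.

Section ScanA.
Variable T : nat -> nat -> nat.

Definition lb (m : nat) (h : nat -> nat) (j : nat) : seq (nat * nat) :=
  [seq (l, h l) | l <- iota j (m.+1 - j) & 0 < h l].

Fixpoint stp (m j : nat) (h : nat -> nat) (s : nat) : seq (seq (nat * nat)) :=
  match s with
  | 0 => [::]
  | s'.+1 => let P := ewis T (lb m h j) in P :: stp m j (delete_boxes h P) s'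
  end.

Definition lastval (P : seq (nat * nat)) : nat :=
  let b := last (0, 0) P in T b.1 b.2.

Definition vals m j h s := map lastval (stp m j h s).

Fixpoint mrg (c : nat) (V : seq nat) (hh : nat) : seq nat :=
  match V with
  | [::] => [::]
  | x :: V' => if (0 < hh) && (x <= T c hh) then T c hh :: mrg c V' hh.-1
               else x :: mrg c V' hh
  end.

Definition lv (v : nat) (P : seq (nat * nat)) := last v [seq T b.1 b.2 | b <- P].

Lemma ewis_aux_rcons v s x :
  ewis_aux T v (rcons s x) =
  ewis_aux T v s ++ (if lv v (ewis_aux T v s) <= T x.1 x.2 then [:: x] else [::]).
Proof.
elim: s v => [|y s IH] v /=; first by rewrite /lv /=; case: ifP.
case: ifP => Hv /=; rewrite IH //.
Qed.

Lemma lb_split m h j : j <= m.+1 ->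
  lb m.+1 h j = lb m h j ++ (if 0 < h m.+1 then [:: (m.+1, h m.+1)] else [::]).
Proof.
move=> Hj; rewrite /lb.
have -> : m.+2 - j = (m.+1 - j) + 1 by rewrite addn1 subSn.
rewrite iotaD filter_cat map_cat subnKC //=.
by case: (0 < h m.+1).
Qed.

Lemma lb_head m h j : j <= m -> 0 < h j ->
  exists r, lb m h j = (j, h j) :: r /\ all (fun b => j < b.1 <= m) r.
Proof.
move=> Hjm Hh; rewrite /lb.
have -> : m.+1 - j = (m - j).+1 by rewrite subSn.
rewrite /= Hh /=; eexists; split; first reflexivity.
apply/allP => b /mapP [l]; rewrite mem_filter mem_iota => /andP [_ /andP [H1 H2]] ->.
by rewrite /= H1 /= -ltnS (leq_trans H2) // addSn subnKC.
Qed.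

Lemma lb_eq m h1 h2 j : (forall l, l <= m -> h1 l = h2 l) -> lb m h1 j = lb m h2 j.
Proof.
move=> E; rewrite /lb.
have F : forall l, l \in iota j (m.+1 - j) -> l <= m.
  by move=> l; rewrite mem_iota => /andP [H1 H2]; lia.
rewrite (@eq_in_filter _ (fun l => 0 < h1 l) (fun l => 0 < h2 l)); last first.
  by move=> l /F Hl; rewrite E.
apply/eq_in_map => l; rewrite mem_filter => /andP [_ /F Hl]; by rewrite E.
Qed.

Lemma ewis_aux_sub v s : {subset ewis_aux T v s <= s}.
Proof.
elim: s v => [|y s IH] v //= x; case: ifP => _.
  by rewrite !inE => /orP [->|/IH ->] //; rewrite orbT.
by rewrite inE => /IH ->; rewrite orbT.
Qed.

Lemma vals_append m j h0 h1 s : j <= m -> (forall l, l <= m -> h1 l = h0 l) ->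
  s <= h0 j -> vals m.+1 j h1 s = mrg m.+1 (vals m j h0 s) (h1 m.+1).
Proof.
elim: s h0 h1 => [|s IH] h0 h1 Hj E Hs //=.
have Hh0 : 0 < h0 j by apply: leq_ltn_trans Hs.
have [r [Hr Hall]] := lb_head Hj Hh0.
rewrite /vals /= -/(vals _ _ _ _).
rewrite (lb_split h1 (leqW Hj)) (lb_eq _ E) Hr.
set Q := ewis_aux T (T j (h0 j)) r.
have QP : forall b, b \in (j, h0 j) :: Q -> b.1 <= m.
  move=> b; rewrite inE => /orP [/eqP -> //|/ewis_aux_sub Hb].
  by have /andP [_ ->] := allP Hall b Hb.
have lastP : lastval ((j, h0 j) :: Q) = lv (T j (h0 j)) Q.
  by rewrite /lastval /lv /= (last_map (fun b => T b.1 b.2) Q (j, h0 j)).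
have nm : (m.+1 \in [seq b.1 | b <- (j, h0 j) :: Q]) = false.
  apply/negbTE/negP => /mapP [b /QP Hb Eb]; by rewrite -Eb ltnn in Hb.
case H1 : (0 < h1 m.+1) => /=.
  rewrite cats1 /ewis ewis_aux_rcons -/Q -lastP.
  case Hc : (lastval ((j, h0 j) :: Q) <= T m.+1 (h1 m.+1)) => /=.
    rewrite -cat_cons /lastval last_cat /= -/(lastval _).
    congr cons.
    rewrite (IH (delete_boxes h0 ((j, h0 j) :: Q))) //.
    - congr (mrg _ _ _).
      by rewrite /delete_boxes -cat_cons map_cat mem_cat nm /= inE eqxx subn1.
    - move=> l Hl; rewrite /delete_boxes -cat_cons map_cat mem_cat /= inE E //.
      have -> : (l \in [:: m.+1]) = false by rewrite inE; apply/negbTE; rewrite neq_ltn ltnS Hl.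
      by rewrite orbF.
    - by rewrite /delete_boxes /= inE eqxx /= subn1 -ltnS prednK.
  rewrite cats0 -/(lastval _); congr cons.
  rewrite (IH (delete_boxes h0 ((j, h0 j) :: Q))) //.
  - congr (mrg _ _ _).
    by rewrite /delete_boxes ?cats0 nm subn0.
  - by move=> l Hl; rewrite /delete_boxes ?cats0 E.
  - by rewrite /delete_boxes /= inE eqxx /= subn1 -ltnS prednK.
rewrite cats0 /ewis -/Q -/(lastval _); congr cons.
rewrite (IH (delete_boxes h0 ((j, h0 j) :: Q))) //.
- congr (mrg _ _ _).
  by rewrite /delete_boxes nm subn0.
- by move=> l Hl; rewrite /delete_boxes E.
- by rewrite /delete_boxes /= inE eqxx /= subn1 -ltnS prednK.
Qed.

Lemma vals_single j h s : s <= h j ->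
  vals j j h s = [seq T j (h j - x) | x <- iota 0 s].
Proof.
elim: s h => [|s IH] h Hs //=.
have Hh : 0 < h j by apply: leq_ltn_trans Hs.
rewrite /vals /= /lb subSnn /= Hh /= -/(vals _ _ _ _) /lastval /=.
rewrite subn0; congr cons.
rewrite IH; last by rewrite /delete_boxes /= inE eqxx subn1 -ltnS prednK.
rewrite -[in RHS](addn0 1) iotaDl -map_comp; apply/eq_map => x /=.
by rewrite /delete_boxes /= inE eqxx subnDA.
Qed.

End ScanA.

Lemma size_stp T m j h s : size (stp T m j h s) = s.
Proof. by elim: s h => [|s IH] h //=; rewrite IH. Qed.

Lemma scan_stp lam T j h s : scan_steps lam T j h s = stp T (ncols lam) j h s.
Proof. by elim: s h => [|s IH] h //=; rewrite IH. Qed.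

Lemma Stab_vals lam T j i : 1 <= i <= collen lam j ->
  Stab lam T j i = nth 0 (rev (vals T (ncols lam) j (collen lam) (collen lam j))) i.-1.
Proof.
move=> /andP [H1 H2].
have Hsz : size (vals T (ncols lam) j (collen lam) (collen lam j)) = collen lam j.
  by rewrite /vals size_map size_stp.
rewrite nth_rev Hsz; last by rewrite prednK.
rewrite /vals (nth_map [::]); last first.
  by move: Hsz; rewrite /vals size_map => ->; rewrite prednK //; lia.
by rewrite /Stab /Pscan scan_stp prednK.
Qed.

Definition Upd (A A' : nat -> bool) (v t : nat) : Prop :=
  exists u, [/\ A u, v <= u <= t, (forall y, A y -> u < y -> t < y)
              & forall x, A' x = (x == t) || (A x && (x != u))].

Fixpoint UpdC (A : nat -> bool) (l : seq (nat * nat)) (A' : nat -> bool) : Prop :=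
  match l with
  | [::] => forall x, A' x = A x
  | (v, t) :: l' => exists B, Upd A B v t /\ UpdC B l' A'
  end.

Lemma Upd_uniq A1 A2 B1 B2 v t : A1 =1 A2 -> Upd A1 B1 v t -> Upd A2 B2 v t -> B1 =1 B2.
Proof.
move=> EA [u [Au /andP [vu ut] Hu EB]] [u' [Au' /andP [vu' ut'] Hu' EB']].
have eu : u = u'.
  case: (ltngtP u u') => // H.
  - by have := Hu u'; rewrite EA Au' => /(_ isT H); rewrite ltnNge ut'.
  - by have := Hu' u; rewrite -EA Au => /(_ isT H); rewrite ltnNge ut.
by move=> x; rewrite EB EB' EA eu.
Qed.

Lemma UpdC_uniq l : forall A1 A2 B1 B2, A1 =1 A2 -> UpdC A1 l B1 -> UpdC A2 l B2 -> B1 =1 B2.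
Proof.
elim: l => [|[v t] l IH] A1 A2 B1 B2 EA /=.
  by move=> E1 E2 x; rewrite E1 E2 EA.
move=> [C1 [U1 H1]] [C2 [U2 H2]].
by apply: (IH C1 C2) => //; apply: Upd_uniq U1 U2.
Qed.

Lemma UpdC_ext l : forall A A' B B', A =1 A' -> B =1 B' -> UpdC A l B -> UpdC A' l B'.
Proof.
elim: l => [|[v t] l IH] A A' B B' EA EB /=.
  by move=> E x; rewrite -EB E EA.
move=> [C [[u [Au vut Hu EC]] H]]; exists C; split; last by apply: IH H.
exists u; split => //; first by rewrite -EA.
  by move=> y; rewrite -EA; apply: Hu.
by move=> x; rewrite EC EA.
Qed.

Lemma gt_trans : transitive (fun a b : nat => b < a).
Proof. by move=> a b d H1 H2; apply: ltn_trans H2 H1. Qed.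

Lemma Upd_same (A A' : nat -> bool) v t : A t -> Upd A A' v t -> A' =1 A.
Proof.
move=> At [u [Au /andP [_ ut] Hu E]] x.
have eu : u = t.
  case: (ltngtP u t) ut => // H _; by have := Hu t At H; rewrite ltnn.
rewrite E eu; case: eqP => [->|] //=; by rewrite ?At ?andbT.
Qed.

Section Merge.
Variable T : nat -> nat -> nat.
Variable c : nat.
Variable Cf : nat -> nat.

Definition msteps hh := [seq (Cf p, T c p) | p <- rev (iota 1 hh)].

Lemma rev_iotaS hh : rev (iota 1 hh.+1) = hh.+1 :: rev (iota 1 hh).
Proof. by rewrite -(addn1 hh) iotaD rev_cat /= addnC. Qed.

Lemma mrg0 V : mrg T c V 0 = V.
Proof. by elim: V => [|x V IH] //=; rewrite IH. Qed.

Lemma merge_upd V : forall hh (E : seq nat) (A : nat -> bool),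
  sorted (fun a b => b < a) V ->
  (forall p, 1 <= p <= hh -> Cf p <= T c p) ->
  (forall p q, 1 <= p -> p < q -> q <= hh -> Cf p < Cf q /\ T c p < T c q) ->
  (forall p, 1 <= p <= hh -> Cf p \in V) ->
  (forall x, x \in E -> 0 < hh -> T c hh < x) ->
  (forall x, A x = (x \in E) || (x \in V)) ->
  UpdC A (msteps hh) (fun x => (x \in E) || (x \in mrg T c V hh)).
Proof.
elim: V => [|x V IH] hh E A SV HCD Hinc HCV HE HA.
  case: hh HCV HCD Hinc HE => [|hh] HCV HCD Hinc HE.
    by move=> y /=; rewrite HA.
  by have := HCV hh.+1; rewrite leqnn /= in_nil => /(_ isT).
case: hh HCV HCD Hinc HE => [|hh] HCV HCD Hinc HE.
  by move=> y /=; rewrite HA mrg0.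
have Vx : forall y, y \in V -> y < x.
  by move: SV => /= SV; have /allP := order_path_min gt_trans SV.
have EM : msteps hh.+1 = (Cf hh.+1, T c hh.+1) :: msteps hh by rewrite /msteps rev_iotaS.
rewrite EM [mrg _ _ _ _]/=.
have Cx : Cf hh.+1 <= x.
  have := HCV hh.+1; rewrite leqnn /= => /(_ isT); rewrite inE => /orP [/eqP -> //|/Vx].
  by move/ltnW.
case: ifP => Hx.
  rewrite /=; exists (fun y => (y \in T c hh.+1 :: E) || (y \in V)); split.
    exists x; split => //.
    - by rewrite HA inE eqxx orbT.
    - by rewrite Cx Hx.
    - move=> y; rewrite HA inE => /orP [/HE H _|/orP [/eqP -> |/Vx H1 H2]].
      + exact: H.
      + by rewrite ltnn.
      + by move: (ltn_trans H1 H2); rewrite ltnn.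
    - move=> y; rewrite HA !inE.
      case: (eqVneq y (T c hh.+1)) => //= Hy.
      case: (eqVneq y x) => [->|Hyx]; rewrite ?andbF ?andbT //=.
      + have [xE|//] := boolP (x \in E).
        by have := HE x xE isT; rewrite ltnNge Hx.
      + by move=> _; apply/negbTE/negP => /Vx; rewrite ltnn.
  apply: UpdC_ext (IH hh (T c hh.+1 :: E) _ _ _ _ _ _ _) => //.
  - by move=> y /=; rewrite !inE; case: (_ == _); rewrite /= ?orbT.
  - by move: SV => /= /path_sorted.
  - by move=> p /andP [p1 p2]; apply: HCD; rewrite p1 (leq_trans p2).
  - by move=> p q p1 pq q2; apply: Hinc => //; apply: leqW.
  - move=> p /andP [p1 p2]; have := HCV p; rewrite p1 (leq_trans p2) // => /(_ isT).
    rewrite inE => /orP [/eqP E1|//].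
    have [H _] := Hinc p hh.+1 p1 (leq_ltn_trans p2 (ltnSn _)) (leqnn _).
    by move: (leq_trans H Cx); rewrite E1 ltnn.
  - move=> y; rewrite inE => /orP [/eqP -> h0|/HE H h0].
      by have [_ ->] := Hinc hh hh.+1 h0 (ltnSn _) (leqnn _).
    have [_ H2] := Hinc hh hh.+1 h0 (ltnSn _) (leqnn _).
    by apply: ltn_trans H2 (H isT).
rewrite -EM; apply: UpdC_ext (IH hh.+1 (x :: E) _ _ _ _ _ _ _) => //.
- by move=> y /=; rewrite !inE; case: (_ == _); rewrite /= ?orbT.
- by move: SV => /= /path_sorted.
- move=> p /andP [p1 p2]; have := HCV p; rewrite p1 p2 => /(_ isT).
  rewrite inE => /orP [/eqP E1|//].
  have H1 : Cf p <= T c p by apply: HCD; rewrite p1.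
  have H2 : T c p <= T c hh.+1.
    case: (ltngtP p hh.+1) p2 => // H _; last by rewrite H.
    by have [_ /ltnW] := Hinc p hh.+1 p1 H (leqnn _).
  by move: (leq_trans H1 H2); rewrite E1 Hx.
- move=> y; rewrite inE => /orP [/eqP -> _|/HE //].
  by rewrite ltnNge Hx.
- by move=> y; rewrite HA !inE orbA (orbC (y \in E)) -orbA.
Qed.

Lemma mrg_bound V hh b : (forall y, y \in V -> y < b) -> (0 < hh -> T c hh < b) ->
  (forall p q, 1 <= p -> p < q -> q <= hh -> T c p < T c q) ->
  all (fun y => y < b) (mrg T c V hh).
Proof.
elim: V hh => [|x V IH] hh HV Hh Hinc //=.
case: ifP => H /=.
  rewrite Hh; last by case/andP: H.
  apply: IH; first by move=> y yV; apply: HV; rewrite inE yV orbT.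
    move=> h0; case/andP: H => H _; have := Hinc hh.-1 hh h0; rewrite prednK // => /(_ (leqnn _) (leqnn _)).
    by move=> /ltn_trans; apply; apply: Hh.
  by move=> p q p1 pq q2; apply: Hinc => //; apply: (leq_trans q2); apply: leq_pred.
rewrite HV ?inE ?eqxx //; apply: IH => //.
by move=> y yV; apply: HV; rewrite inE yV orbT.
Qed.

Lemma mrg_sorted V hh : sorted (fun a b => b < a) V ->
  (forall p q, 1 <= p -> p < q -> q <= hh -> T c p < T c q) ->
  sorted (fun a b => b < a) (mrg T c V hh).
Proof.
have tr := gt_trans.
elim: V hh => [|x V IH] hh SV Hinc //=.
have Vx : forall y, y \in V -> y < x.
  by move: SV => /= SV; have /allP := order_path_min tr SV.
case: ifP => H /=.
  case/andP: H => h0 H.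
  rewrite (path_sortedE tr); apply/andP; split.
    apply: mrg_bound.
    - by move=> y /Vx /leq_trans; apply.
    - move=> h1; have := Hinc hh.-1 hh h1; rewrite prednK //; exact.
    - by move=> p q p1 pq q2; apply: Hinc => //; apply: (leq_trans q2); apply: leq_pred.
  apply: IH; first by move: SV => /= /path_sorted.
  by move=> p q p1 pq q2; apply: Hinc => //; apply: (leq_trans q2); apply: leq_pred.
rewrite (path_sortedE tr); apply/andP; split.
  apply: mrg_bound => //.
  by move=> h0; move: H; rewrite h0 /= leqNgt => /negbFE.
by apply: IH => //; move: SV => /= /path_sorted.
Qed.

End Merge.

Lemma assign_cons pi k I w W : assign pi (k :: I) (w :: W) = assign (set_nth 0 pi k.-1 w) I W.
Proof. by case: W. Qed.

Lemma assign_nil pi W : assign pi [::] W = pi.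
Proof. by case: W. Qed.

Lemma size_assign I : forall pi W, all (fun k => 0 < k <= size pi) I -> size (assign pi I W) = size pi.
Proof.
elim: I => [|k I IH] pi W; first by case: W.
case: W => [|w W] //= /andP [/andP [k0 ks] HI].
have E : size (set_nth 0 pi k.-1 w) = size pi by rewrite size_set_nth; apply/maxn_idPr; rewrite prednK.
by rewrite assign_cons IH E.
Qed.

Lemma pent_assign_out I : forall pi W q, all (fun k => 0 < k) I -> 0 < q -> q \notin I ->
  pent (assign pi I W) q = pent pi q.
Proof.
elim: I => [|k I IH] pi W q; first by case: W.
case: W => [|w W] //= /andP [k0 HI] q0; rewrite inE negb_or => /andP [qk qI].
rewrite assign_cons IH // /pent nth_set_nth /=.
case: eqP => // E; move: qk; rewrite -(prednK k0) -(prednK q0) E; by rewrite eqxx.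
Qed.

Lemma pent_assign_in I : forall pi W x, uniq I -> all (fun k => 0 < k) I -> size W = size I ->
  x < size I -> pent (assign pi I W) (nth 0 I x) = nth 0 W x.
Proof.
elim: I => [|k I IH] pi W x //.
case: W => [|w W] //= /andP [kI uI] /andP [k0 HI] [sW].
case: x => [|x] /=.
  by move=> _; rewrite assign_cons pent_assign_out // /pent nth_set_nth /= eqxx.
by rewrite ltnS => Hx; rewrite assign_cons IH.
Qed.

Lemma first_filter p a b k r : filter p (iota a b) = k :: r ->
  [/\ a <= k < a + b, p k & forall q, a <= q < k -> ~~ p q].
Proof.
elim: b a => [|b IH] a //=.
case: ifP => Hp.
  case=> <- _; split => //; first by rewrite leqnn addnS ltnS leq_addr.
  by move=> q; case: ltngtP.
move=> /IH [/andP [H1 H2] Hk Hq]; split => //.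
  by rewrite (ltnW H1) addnS -addSn.
move=> q /andP [aq qk]; case: (eqVneq q a) => [->|qa]; first by rewrite Hp.
by apply: Hq; rewrite qk andbT ltn_neqAle eq_sym qa.
Qed.

Section Chain.
Variables (n : nat) (pi : seq nat) (cj t : nat).
Local Notation P := (pent pi).

Fixpoint Pch (cur : nat) (ks : seq nat) : Prop :=
  match ks with
  | [::] => P cur = t
  | k :: ks' => [/\ cj < k <= n, P cur < P k <= t,
                  (forall q, cj < q < k -> ~~ ((P cur < P q) && (P q <= t)))
                & Pch k ks']
  end.

Hypothesis cjn : cj <= n.
Hypothesis tpos : exists q, cj < q <= n /\ P q = t.

Lemma chain_spec fuel cur : P cur <= t -> t - P cur < fuel -> Pch cur (chain fuel n pi cj t cur).
Proof.
elim: fuel cur => [|fuel IH] cur // Hle Hf /=.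
case: eqP => [//|Hne].
have [q [/andP [q1 q2] Hq]] := tpos.
case E: [seq k <- iota cj.+1 (n - cj) | (P cur < P k) && (P k <= t)] => [|k r].
  have : q \in [seq k <- iota cj.+1 (n - cj) | (P cur < P k) && (P k <= t)].
    rewrite mem_filter mem_iota Hq leqnn q1 andbT ltn_neqAle Hle andbT.
    rewrite addSn subnKC // ltnS q2 !andbT; by apply/eqP.
  by rewrite E.
have [/andP [k1 k2] /andP [Hk1 Hk2] Hmin] := first_filter E.
split.
- by move: k2; rewrite k1 addSn subnKC.
- by rewrite Hk1.
- by move=> q' /andP [q1' q2']; apply: Hmin; rewrite q1' q2'.
- by apply: IH => //; lia.
Qed.

Lemma Pch_all cur ks : Pch cur ks -> all (fun k => cj < k <= n) ks.
Proof. by elim: ks cur => [|k ks IH] cur //= [H1 _ _ /IH ->]; rewrite H1. Qed.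

Lemma Pch_vals cur ks : Pch cur ks -> sorted ltn (map P (cur :: ks)) /\ all (fun k => P k <= t) ks.
Proof.
elim: ks cur => [|k ks IH] cur //= [_ /andP [H1 H2] _ /IH [S A]].
by split; [rewrite H1 | rewrite H2].
Qed.

Lemma Pch_last cur ks : Pch cur ks -> last (P cur) (map P ks) = t.
Proof. by elim: ks cur => [|k ks IH] cur //= [_ _ _ /IH]. Qed.

Lemma Pch_sorted cur ks : Pch cur ks -> sorted ltn ks.
Proof.
elim: ks cur => [|k ks IH] cur //= [H1 H2 H3 H4].
have S := IH _ H4; case: ks H4 S {IH} => [|k' ks] //= [/andP [k'1 k'2] /andP [Hk' Hk't] Hmin _] ->.
rewrite andbT ltnNge; apply/negP => Hk'k.
case: (ltngtP k' k) Hk'k => // [H _|E _]; last by rewrite E ltnn in Hk'.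
have := H3 k'; rewrite k'1 H Hk't andbT => /(_ isT); case/andP: H2 => H2 _.
by rewrite (ltn_trans H2 Hk').
Qed.

Lemma Pch_min cur ks : Pch cur ks -> forall x, x < size ks -> forall q, cj < q < nth 0 ks x ->
  ~~ ((nth 0 (map P (cur :: ks)) x < P q) && (P q <= t)).
Proof.
elim: ks cur => [|k ks IH] cur //= [H1 H2 H3 H4] [|x] //= Hx q Hq.
exact: IH.
Qed.

End Chain.

Lemma mem_take_pent s l y : l <= size s ->
  reflect (exists2 q, 0 < q <= l & pent s q = y) (y \in take l s).
Proof.
move=> Hl; apply: (iffP idP).
  move=> H; have ys : y \in s by apply: mem_take H.
  exists (index y s).+1; last by rewrite /pent /= nth_index.
  by rewrite /= -(in_take_leq _ Hl).
move=> [q /andP [q0 ql] <-]; rewrite /pent -(nth_take _ (_ : q.-1 < l)); last first.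
  by rewrite prednK.
by apply: mem_nth; rewrite size_takel // prednK.
Qed.

Section Row.
Variables (n : nat) (pi : seq nat) (c i t : nat).
Local Notation P := (pent pi).
Hypothesis Hsz : size pi = n.
Hypothesis Hmem : pi =i iota 1 n.
Hypothesis Hi : 0 < i <= c.
Hypothesis Hc : c <= n.
Hypothesis Hvt : P i <= t.
Hypothesis Ht : 0 < t <= n.
Hypothesis Hlow : forall q, 0 < q <= c -> q != i -> (P q < P i) || (t < P q).

Definition newpi := if P i == t then pi
  else let I := i :: chain n n pi c t i in assign pi I (rotr 1 [seq P k | k <- I]).

Lemma row_spec :
  [/\ size newpi = n, pent newpi i = t,
      (forall q, 0 < q <= c -> q != i -> pent newpi q = P q)
    & forall l, c <= l <= n -> Upd (mem (take l pi)) (mem (take l newpi)) (P i) t].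
Proof.
have tpi : t \in pi by rewrite Hmem mem_iota addnC addn1 ltnS.
have [ti|tni] := eqVneq (P i) t.
  have tA : forall l, c <= l <= n -> t \in take l pi.
    move=> l /andP [cl ln]; apply/mem_take_pent; first by rewrite Hsz.
    by exists i => //; case/andP: Hi => i0 ic; rewrite i0 (leq_trans ic cl).
  rewrite /newpi ti eqxx; split => //.
  move=> l Hl; exists t; split => //.
  - exact: tA.
  - by rewrite leqnn.
  - move=> x /=; case: eqP => [->|_] //=; first by rewrite tA.
    by rewrite andbT.
rewrite /newpi (negbTE tni).
have uniqpi : uniq pi by rewrite (uniq_size_uniq (iota_uniq 1 n)) ?Hsz ?size_iota // => x; rewrite Hmem.
have Pinj : forall q1 q2, 0 < q1 <= n -> 0 < q2 <= n -> P q1 = P q2 -> q1 = q2.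
  move=> q1 q2 /andP [a1 b1] /andP [a2 b2] E.
  move: E; rewrite /pent => /eqP; rewrite nth_uniq ?Hsz ?prednK //.
  by move/eqP => E'; rewrite -(prednK a1) -(prednK a2) E'.
have Pmem : forall q, 0 < q <= n -> P q \in pi.
  by move=> q /andP [q0 qn]; apply: mem_nth; rewrite Hsz prednK.
have tpos : exists q, c < q <= n /\ P q = t.
  have ti : index t pi < n by rewrite -Hsz index_mem.
  exists (index t pi).+1; rewrite /pent /= nth_index // ti andbT; split => //.
  rewrite ltnNge; apply/negP => H.
  have [E|qi] := eqVneq (index t pi).+1 i; first by move: tni; rewrite -E /pent /= nth_index // eqxx.
  have := Hlow (_ : 0 < (index t pi).+1 <= c) qi; rewrite /pent /= nth_index // => /(_ H).
  by rewrite ltnNge Hvt ltnn.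
have v1 : 0 < P i.
  have : P i \in pi by apply: Pmem; case/andP: Hi => -> ic; rewrite (leq_trans ic).
  by rewrite Hmem mem_iota => /andP [].
have PC : Pch n pi c t i (chain n n pi c t i).
  apply: chain_spec => //; case/andP: Ht => _ tn; lia.
set ks := chain n n pi c t i in PC *.
have kall := Pch_all PC.
have [SU Ut] := Pch_vals PC.
have Ul := Pch_last PC.
have Sk := Pch_sorted PC.
have Pm := Pch_min PC.
have kc : forall x, x < size ks -> c < nth 0 ks x <= n by move=> x Hx; apply: (allP kall); apply: mem_nth.
set I := i :: ks.
set U := [seq P k | k <- I].
have iks : i \notin ks.
  apply/negP => /(nthP 0) [x Hx E]; have := kc x Hx; rewrite E ltnNge; case/andP: Hi => _ -> //.
have uI : uniq I by rewrite /= iks (sorted_uniq ltn_trans ltnn Sk).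
have I0 : all (fun k => 0 < k) I.
  by case/andP: Hi => i0 _; rewrite /= i0 /=; apply/allP => k /(allP kall) /andP [H _]; apply: leq_ltn_trans H.
have sW : size (rotr 1 U) = size I by rewrite size_rotr size_map.
have Ueq : U = rcons (belast (P i) [seq P k | k <- ks]) (last (P i) [seq P k | k <- ks]).
  by rewrite -lastI.
have W0 : nth 0 (rotr 1 U) 0 = t by rewrite Ueq rotr1_rcons /= Ul.
have WS : forall x, x < size ks -> nth 0 (rotr 1 U) x.+1 = nth 0 U x.
  move=> x Hx; rewrite Ueq rotr1_rcons /= nth_rcons size_belast size_map Hx //.
have Imem : forall x, x < size ks -> nth 0 I x.+1 = nth 0 ks x by [].
have P'I := pent_assign_in pi uI I0 sW.
have P'out : forall q, 0 < q -> q \notin I -> pent (assign pi I (rotr 1 U)) q = P q.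
  by move=> q q0 qI; apply: pent_assign_out.
have szI : all (fun k => 0 < k <= size pi) I.
  rewrite /= Hsz; case/andP: Hi => -> ic; rewrite (leq_trans ic Hc) /=.
  apply/allP => k /(allP kall) /andP [H1 H2]; rewrite H2 andbT; exact: leq_ltn_trans H1.
have sz' : size (assign pi I (rotr 1 U)) = n by rewrite size_assign // Hsz.
have Umono : forall x y, x < y -> y < size U -> nth 0 U x < nth 0 U y.
  move=> x y xy yU; apply: (sorted_ltn_nth ltn_trans) => //; rewrite inE //.
  exact: ltn_trans xy yU.
have szU : size U = (size ks).+1 by rewrite size_map.
have Ulast : nth 0 U (size ks) = t by rewrite -Ul (last_nth 0) size_map.
split => //.
- by have := P'I 0 isT; rewrite W0.
- move=> q /andP [q0 qc] qi; apply: P'out => //; rewrite inE negb_or qi /=.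
  apply/negP => /(nthP 0) [x Hx E]; have := kc x Hx; by rewrite E ltnNge qc.
move=> l /andP [cl ln].
set r := find (fun k => l < k) ks.
have rsz : r <= size ks by apply: find_size.
have before : forall x, x < r -> nth 0 ks x <= l.
  by move=> x Hx; have := before_find 0 Hx; rewrite /= => /negbT; rewrite -leqNgt.
have after : forall x, r <= x -> x < size ks -> l < nth 0 ks x.
  move=> x rx xs.
  have hs : has (fun k => l < k) ks by rewrite has_find (leq_ltn_trans rx xs).
  have := nth_find 0 hs; rewrite -/r /=.
  case: (ltngtP r x) rx => // [H _ H2|<- //].
  apply: ltn_trans H2 _; apply: (sorted_ltn_nth ltn_trans) => //; rewrite inE //.
  exact: ltn_trans H xs.
have posI : forall x, x <= r -> 0 < nth 0 I x <= l.
  case=> [|x] Hx /=; first by case/andP: Hi => -> ic; rewrite (leq_trans ic cl).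
  have xs : x < size ks by apply: leq_trans Hx rsz.
  rewrite before //; have := kc x xs; case/andP => H _; by rewrite (leq_ltn_trans _ H).
have U0le : forall x, x < size U -> nth 0 U 0 <= nth 0 U x.
  by case=> [|x] // Hx; apply/ltnW/Umono.
have Ulet : forall x, x < size U -> nth 0 U x <= t.
  move=> x; rewrite szU ltnS => Hx; rewrite -Ulast.
  case: (ltngtP x (size ks)) Hx => // [H _|-> _] //; by apply/ltnW/Umono; rewrite // szU.
have rU : r < size U by rewrite szU ltnS.
set u := nth 0 U r.
have Piu : P i <= u by apply: (U0le r rU).
have ut : u <= t by apply: Ulet.
have uP : u = P (nth 0 I r) by rewrite /u (nth_map 0) //= ltnS.
have lsz : l <= size pi by rewrite Hsz.
exists u; split.
- by apply/mem_take_pent => //; exists (nth 0 I r) => //; apply: posI.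
- by rewrite Piu ut.
- move=> y /= /mem_take_pent [] // q /andP [q0 ql] <- uq.
  have [qc|cq] := leqP q c.
    have [E|qi] := eqVneq q i.
      by move: uq; rewrite E ltnNge Piu.
    have := Hlow (_ : 0 < q <= c) qi; rewrite q0 qc => /(_ isT) /orP [H|//].
    by move: (leq_ltn_trans Piu uq); rewrite ltnNge (ltnW H).
  case: (ltngtP r (size ks)) rsz => // [Hr _|Hr _]; last by move: uq; rewrite /u Hr Ulast.
  have := Pm r Hr q; rewrite cq /= (leq_ltn_trans ql (after r (leqnn _) Hr)) => /(_ isT).
  by rewrite -/U -/u uq /= ltnNge.
have nI : forall q, 0 < q <= n -> q \in I -> q = nth 0 I (index q I) /\ index q I < size I.
  by move=> q _ qI; rewrite nth_index // index_mem.
have Ipos : forall x, x < size I -> 0 < nth 0 I x <= n.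
  by move=> x Hx; rewrite -Hsz; apply: (allP szI); rewrite mem_nth.
have lt_r : forall y, y < size ks -> nth 0 ks y <= l -> y < r.
  by move=> y ys yl; rewrite ltnNge; apply/negP => ry; have := after y ry ys; rewrite ltnNge yl.
move=> x /=; apply/idP/idP.
  move=> /mem_take_pent; rewrite sz' => /(_ ln) [q /andP [q0 ql] <-].
  have qn : 0 < q <= n by rewrite q0 (leq_trans ql ln).
  have [qI|qI] := boolP (q \in I); last first.
    rewrite P'out //; apply/orP; right; apply/andP; split.
      by apply/mem_take_pent => //; exists q; rewrite ?q0.
    apply/eqP => E; rewrite uP in E.
    have rI : r < size I by move: rU; rewrite size_map.
    have E' := Pinj _ _ qn (Ipos r rI) E; by move: qI; rewrite E' mem_nth.
  have [Eq yI] := nI q qn qI.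
  move: Eq yI; case: (index q I) => [|y] Eq yI.
    by rewrite Eq P'I // W0 eqxx.
  have ys : y < size ks by [].
  have yr : y < r by apply: lt_r => //; rewrite -Imem // -Eq.
  rewrite Eq P'I // WS //; apply/orP; right; apply/andP; split.
    apply/mem_take_pent => //; exists (nth 0 I y); first by apply: posI; apply: ltnW.
    by rewrite (nth_map 0) // (ltn_trans ys) // ltnSn.
  by rewrite neq_ltn Umono.
case/orP => [/eqP ->|/andP [xA xu]].
  apply/mem_take_pent; first by rewrite sz'.
  by exists i; [case/andP: Hi => -> ic; rewrite (leq_trans ic cl) | have := P'I 0 isT; rewrite W0].
move: xA => /mem_take_pent [] // q /andP [q0 ql] Eq.
have qn : 0 < q <= n by rewrite q0 (leq_trans ql ln).
apply/mem_take_pent; first by rewrite sz'.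
have [qI|qI] := boolP (q \in I); last by exists q; rewrite ?q0 // P'out.
have [Eq2 yI] := nI q qn qI.
have xU : x = nth 0 U (index q I) by rewrite (nth_map 0) // -Eq2.
have yr : index q I < r.
  move: Eq2 yI xU; case: (index q I) => [|y] Eq2 yI xU.
    case: (posnP r) => // r0; by move: xu; rewrite /u r0 xU eqxx.
  have ys : y < size ks by [].
  have yr : y < r by apply: lt_r => //; rewrite -Imem // -Eq2.
  case: (ltngtP y.+1 r) yr => // H _; by move: xu; rewrite /u -H xU eqxx.
have ys : index q I < size ks by apply: leq_trans yr rsz.
exists (nth 0 I (index q I).+1); first by apply: posI.
by rewrite P'I ?WS // -xU.
Qed.

End Row.

Section Main.
Variables (n : nat) (lam : seq nat) (T : nat -> nat -> nat).
Hypothesis Hn : 0 < n.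
Hypothesis Hpart : is_npartition lam n.
Hypothesis HSS : semistandard lam n T.

Local Notation c := (collen lam).
Local Notation L := (ncols lam).

Lemma c_anti j k : j <= k -> c k <= c j.
Proof. by move=> jk; apply: sub_count => x /= H; apply: leq_trans H. Qed.

Lemma c_le_n j : c j <= n.
Proof. by case: Hpart => <- _; apply: count_size. Qed.

Lemma c_pos_L j : 0 < c j -> j <= L.
Proof.
case: Hpart => _ S; rewrite /collen /ncols -has_count => /hasP [x xl jx].
case: lam S xl => [|y s] //= S; rewrite inE => /orP [/eqP <- //|xs].
have tr : transitive geq by move=> a b d H1 H2; apply: leq_trans H2 H1.
apply: leq_trans jx _; have := order_path_min tr S; by move/allP => /(_ x xs).
Qed.

Lemma L_c_pos j : 0 < j <= L -> 0 < c j.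
Proof.
move=> /andP [j0 jL]; rewrite /collen /ncols -has_count.
case: Hpart => Hs _; case: lam Hs jL => [|y s] /= _ jy; [lia | by rewrite jy].
Qed.

Lemma T_range j i : 0 < j -> 0 < i <= c j -> 0 < T j i <= n.
Proof. by case: HSS => H _ _ j0 Hi; apply: H. Qed.

Lemma T_row j i : 0 < j -> 0 < i <= c j.+1 -> T j i <= T j.+1 i.
Proof.
case: HSS => _ H _ j0 /andP [i0 ic]; apply: H; split => //; rewrite i0 //=.
by apply: leq_trans ic (c_anti (leqnSn _)).
Qed.

Lemma T_col j p q : 0 < j -> 0 < p -> p < q -> q <= c j -> T j p < T j q.
Proof.
case: HSS => _ _ H j0 p0; elim: q => [|q IH] // pq qc.
move: pq; rewrite ltnS => pq.
have Hq : T j q < T j q.+1.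
  apply: H; split => //; first by rewrite (leq_trans p0 pq) (ltnW qc).
have [E|pq'] := eqVneq p q; first by rewrite E.
have pq'' : p < q by rewrite ltn_neqAle pq' pq.
exact: ltn_trans (IH pq'' (ltnW qc)) Hq.
Qed.

Local Notation step := (greedy_step lam n T).

Lemma foldl_cons (A B : Type) (f : A -> B -> A) z x s : foldl f z (x :: s) = foldl f (f z x) s.
Proof. by []. Qed.

Lemma msteps_S Cf k i : msteps T k Cf i.+1 = (Cf i.+1, T k i.+1) :: msteps T k Cf i.
Proof. by rewrite /msteps rev_iotaS. Qed.

Lemma rows_proc m i : 0 < m -> forall pi, i <= c m.+1 -> size pi = n -> pi =i iota 1 n ->
  (forall q, 0 < q <= i -> pent pi q = T m q) ->
  (forall q, i < q <= c m.+1 -> pent pi q = T m.+1 q) ->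
  let pi' := foldl step pi [seq (m.+1, p) | p <- rev (iota 1 i)] in
  [/\ size pi' = n, pi' =i iota 1 n, (forall q, 0 < q <= c m.+1 -> pent pi' q = T m.+1 q)
    & forall l, c m.+1 <= l <= n ->
        UpdC (mem (take l pi)) (msteps T m.+1 (T m) i) (mem (take l pi'))].
Proof.
move=> m0; elim: i => [|i IH] pi ic Hsz Hmem Hlo Hhi.
  by split => //; move=> q /andP [q0 qc]; apply: Hhi; rewrite q0.
have cm : c m.+1 <= c m by apply: c_anti.
have Hi : 0 < i.+1 <= c m.+1 by [].
have Pi : pent pi i.+1 = T m i.+1 by apply: Hlo; rewrite leqnn.
have Hvt : pent pi i.+1 <= T m.+1 i.+1 by rewrite Pi; apply: T_row.
have Ht : 0 < T m.+1 i.+1 <= n by apply: T_range.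
have Hlow : forall q, 0 < q <= c m.+1 -> q != i.+1 ->
    (pent pi q < pent pi i.+1) || (T m.+1 i.+1 < pent pi q).
  move=> q /andP [q0 qc] qi; case: (ltngtP q i.+1) qi => // [H|H] _.
    have -> : pent pi q = T m q by apply: Hlo; rewrite q0 (ltnW H).
    by rewrite Pi T_col // (leq_trans ic cm).
  by rewrite Hhi ?H // T_col ?orbT.
have [R1 R2 R3 R4] := row_spec Hsz Hmem Hi (c_le_n _) Hvt Ht Hlow.
have Estep : step pi (m.+1, i.+1) = newpi n pi (c m.+1) i.+1 (T m.+1 i.+1).
  by rewrite /greedy_step /newpi /= Pi.
rewrite rev_iotaS map_cons foldl_cons Estep.
set pi1 := newpi n pi (c m.+1) i.+1 (T m.+1 i.+1) in R1 R2 R3 R4 *.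
have Hmem1 : pi1 =i iota 1 n.
  have H4 := R4 n; rewrite c_le_n leqnn in H4; have := H4 isT.
  rewrite !take_oversize ?R1 ?Hsz // => U.
  have tpi : T m.+1 i.+1 \in pi by rewrite Hmem mem_iota addnC addn1 ltnS.
  by move=> x; rewrite -Hmem; apply: (Upd_same tpi U).
have Hlo' : forall q, 0 < q <= i -> pent pi1 q = T m q.
  move=> q /andP [q0 qi]; rewrite R3 ?q0 ?(leq_trans qi (ltnW ic)) //; first by apply: Hlo; rewrite q0 (leqW qi).
  by rewrite neq_ltn ltnS qi.
have Hhi' : forall q, i < q <= c m.+1 -> pent pi1 q = T m.+1 q.
  move=> q /andP [iq qc]; case: (eqVneq q i.+1) => [->|qi]; first by rewrite R2.
  rewrite R3 ?qc ?(leq_ltn_trans _ iq) //; apply: Hhi; by rewrite qc andbT ltn_neqAle eq_sym qi iq.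
have [S1 S2 S3 S4] := IH pi1 (ltnW ic) R1 Hmem1 Hlo' Hhi'.
split => // l Hl; rewrite msteps_S /=; exists (mem (take l pi1)); split; last exact: S4.
by rewrite -Pi; apply: R4.
Qed.

Definition colseq j k := [seq T j q | q <- iota 1 k].

Lemma colseq_sorted j k : 0 < j -> k <= c j -> sorted ltn (colseq j k).
Proof.
move=> j0 kc; apply/(sortedP 0) => x; rewrite size_map size_iota => Hx.
rewrite !(nth_map 0) ?size_iota ?(ltn_trans (ltnSn x)) // !nth_iota ?(ltn_trans (ltnSn x)) //.
by apply: T_col; rewrite ?add1n // (leq_trans Hx kc).
Qed.

Lemma take_colseq j k pi : k <= size pi -> (forall q, 0 < q <= k -> pent pi q = T j q) ->
  take k pi = colseq j k.
Proof.
move=> ks H; apply: (eq_from_nth (x0 := 0)); first by rewrite size_takel // size_map size_iota.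
move=> x; rewrite size_takel // => Hx.
rewrite nth_take // (nth_map 0) ?size_iota // nth_iota // add1n.
by rewrite -H.
Qed.

Lemma rev_single j k : rev [seq T j (k - x) | x <- iota 0 k] = colseq j k.
Proof.
apply: (eq_from_nth (x0 := 0)); first by rewrite size_rev !size_map !size_iota.
move=> x; rewrite size_rev size_map size_iota => Hx.
rewrite nth_rev ?size_map ?size_iota // (nth_map 0) ?size_iota; last by lia.
rewrite nth_iota; last by lia.
rewrite (nth_map 0) ?size_iota // nth_iota //; congr (T j); lia.
Qed.

Definition Srow m k := rev (vals T m k c (c k)).

Definition Inv m pi := [/\ size pi = n, pi =i iota 1 n,
  (forall q, 0 < q <= c m -> pent pi q = T m q)
  & forall k, 0 < k <= m -> sort leq (take (c k) pi) = Srow m k].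

Definition colstep pi j := foldl step pi [seq (j, i) | i <- rev (iota 1 (c j))].

Lemma Srow_single m : Srow m m = colseq m (c m).
Proof. by rewrite /Srow vals_single // rev_single. Qed.

Lemma col_step m pi : 0 < m -> Inv m pi -> Inv m.+1 (colstep pi m.+1).
Proof.
move=> m0 [I1 I2 I3 I4].
have cm : c m.+1 <= c m by apply: c_anti.
have H1 : forall q, 0 < q <= c m.+1 -> pent pi q = T m q.
  by move=> q /andP [q0 qc]; apply: I3; rewrite q0 (leq_trans qc cm).
have H2 : forall q, c m.+1 < q <= c m.+1 -> pent pi q = T m.+1 q.
  by move=> q /andP [H H']; move: (leq_trans H H'); rewrite ltnn.
have [S1 S2 S3 S4] := rows_proc m0 (leqnn _) I1 I2 H1 H2.
rewrite /colstep; set pi' := foldl _ _ _ in S1 S2 S3 S4 *.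
have uniq' : uniq pi' by rewrite (uniq_size_uniq (iota_uniq 1 n)) ?S1 ?size_iota // => x; rewrite S2.
split => // k /andP [k0 km].
have ckn : c k <= size pi' by rewrite S1 c_le_n.
have Ssort : sorted ltn (sort leq (take (c k) pi')).
  by rewrite ltn_sorted_uniq_leq sort_uniq take_uniq // (sort_sorted leq_total).
case: (ltngtP k m.+1) km => // [km _|E _]; last first.
  rewrite E in ckn *; rewrite Srow_single (take_colseq (j := m.+1) ckn) //.
  have CS := colseq_sorted (ltn0Sn m) (leqnn (c m.+1)).
  by rewrite (sorted_sort leq_trans) //; move: CS; rewrite ltn_sorted_uniq_leq => /andP [].
have kmle : k <= m by [].
have ckm : c m.+1 <= c k by apply: c_anti; apply: ltnW.
set V := vals T m k c (c k).
have I4k : sort leq (take (c k) pi) = rev V by rewrite I4 ?k0.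
have memA : forall x, (x \in take (c k) pi) = (x \in V) by move=> x; rewrite -(mem_sort leq) I4k mem_rev.
have ckp : c k <= size pi by rewrite I1 c_le_n.
have SV : sorted (fun a b => b < a) V.
  have : sorted ltn (rev V).
    rewrite -I4k ltn_sorted_uniq_leq sort_uniq take_uniq ?(sort_sorted leq_total) //.
    by rewrite (uniq_size_uniq (iota_uniq 1 n)) ?I1 ?size_iota // => x; rewrite I2.
  by rewrite rev_sorted.
have Tmono : forall p q, 0 < p -> p < q -> q <= c m.+1 -> T m p < T m q /\ T m.+1 p < T m.+1 q.
  by move=> p q p0 pq qc; split; apply: T_col => //; apply: leq_trans qc cm.
have HV : forall p, 0 < p <= c m.+1 -> T m p \in V.
  move=> p /andP [p0 pc]; rewrite -memA -H1 ?p0 //.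
  by apply/mem_take_pent => //; exists p; rewrite ?p0 ?(leq_trans pc ckm).
have HE : forall x, x \in [::] -> 0 < c m.+1 -> T m.+1 (c m.+1) < x by [].
have HA : forall x, mem (take (c k) pi) x = (x \in [::]) || (x \in V).
  by move=> x; rewrite in_nil /= -memA.
have M := @merge_upd T m.+1 (T m) V (c m.+1) [::] (mem (take (c k) pi)) SV
  (fun p Hp => T_row m0 Hp) Tmono HV HE HA.
have Eq := UpdC_uniq (fun x => erefl) (S4 (c k) _) M; rewrite ckm c_le_n /= in Eq.
have Eq' := Eq isT.
have Sr : Srow m.+1 k = rev (mrg T m.+1 V (c m.+1)).
  by rewrite /Srow (vals_append T kmle (h0 := c) (h1 := c)).
rewrite Sr; apply: (irr_sorted_eq ltn_trans ltnn) => //.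
  by rewrite rev_sorted; apply: mrg_sorted => // p q p0 pq qc; have [] := Tmono p q p0 pq qc.
move=> x; rewrite mem_sort mem_rev; exact: (Eq' x).
Qed.


Lemma Inv_init : Inv 1 (pi_init lam n T).
Proof.
rewrite /pi_init -/(colseq 1 (c 1)).
set C1 := colseq 1 (c 1).
have CS : sorted ltn C1 by apply: colseq_sorted.
have CU : uniq C1 by move: CS; rewrite ltn_sorted_uniq_leq => /andP [].
have Cleq : sorted leq C1 by move: CS; rewrite ltn_sorted_uniq_leq => /andP [].
rewrite (sorted_sort leq_trans Cleq).
have Csub : forall x, x \in C1 -> x \in iota 1 n.
  move=> x /mapP [q]; rewrite mem_iota => /andP [q0 qc] ->.
  have := @T_range 1 q (ltn0Sn 0); rewrite q0 /= -ltnS (leq_trans qc) // => /(_ isT) /andP [H H'].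
  by rewrite mem_iota H add1n ltnS.
have memP : pi_init lam n T =i iota 1 n.
  move=> x; rewrite /pi_init -/(colseq 1 (c 1)) -/C1 (sorted_sort leq_trans Cleq) mem_cat mem_filter.
  by case: (boolP (x \in C1)) => [/Csub -> //|_] /=.
rewrite /pi_init -/(colseq 1 (c 1)) -/C1 (sorted_sort leq_trans Cleq) in memP.
set F := [seq k <- iota 1 n | k \notin C1] in memP *.
have U0 : uniq (C1 ++ F).
  rewrite cat_uniq CU filter_uniq ?iota_uniq // andbT.
  by apply/hasPn => x; rewrite mem_filter => /andP [].
have szC : size C1 = c 1 by rewrite size_map size_iota.
have sz0 : size (C1 ++ F) = n.
  have := uniq_size_uniq (iota_uniq 1 n) (fun x => esym (memP x)).
  by rewrite U0 size_iota => /esym /eqP.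
split => //.
- move=> q /andP [q0 qc]; rewrite /pent nth_cat szC (_ : q.-1 < c 1); last by rewrite prednK.
  by rewrite /C1 /colseq (nth_map 0) ?size_iota ?prednK // nth_iota ?prednK // add1n prednK.
- move=> k /andP [k0 k1]; have -> : k = 1 by apply/eqP; rewrite eqn_leq k1.
  by rewrite Srow_single (take_size_cat _ szC) (sorted_sort leq_trans Cleq).
Qed.

Lemma Inv_pim m : 0 < m -> Inv m (foldl colstep (pi_init lam n T) (iota 2 m.-1)).
Proof.
elim: m => [|m IH] // _.
case: m IH => [|m] IH; first exact: Inv_init.
have E : iota 2 m.+2.-1 = rcons (iota 2 m) m.+2.
  by rewrite -[m.+2.-1]/(m.+1) -(addn1 m) iotaD -cats1 add2n addn1.
by rewrite E foldl_rcons; apply: col_step => //; apply: IH.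
Qed.

End Main.

Lemma foldl_flat (A B : Type) (f : A -> B -> A) (g : nat -> seq B) z l :
  foldl f z (flatten [seq g j | j <- l]) = foldl (fun a j => foldl f a (g j)) z l.
Proof. by elim: l z => [|j l IH] z //=; rewrite foldl_cat IH. Qed.

Unset Implicit Arguments.

Theorem corollary5p3 (n : nat) (lam : seq nat) (T : nat -> nat -> nat) :
  0 < n ->
  is_npartition lam n ->
  lam != nseq n 0 ->
  nth 0 lam n.-1 = 0 ->
  semistandard lam n T ->
  forall j i, in_shape lam j i ->
    Ytab lam (pi_T lam n T) j i = Stab lam T j i.
Proof.
move=> Hn Hpart _ _ HSS j i [j0 Hi].
have cj0 : 0 < collen lam j by case/andP: Hi => H1 H2; apply: leq_trans H2.
have jL := c_pos_L Hpart cj0.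
have L0 : 0 < ncols lam by apply: leq_trans jL.
have [_ _ _ I4] := Inv_pim Hn Hpart HSS L0.
rewrite Stab_vals // /Ytab /pi_T /reading_boxes foldl_flat.
by rewrite I4 ?j0.
Qed.
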